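(* Let $q\ge2$, $t\ge1$, $b\ge1$, $n\ge bt+1$. Then for every $\sigma\in\Sigma_q$, \[ |\mathcal{D}_{t,b}(\boldsymbol{X}^{\sigma}_{n,q,b})|=D_{q,b}(n,t)=\sum_{i=0}^{t}\binom{n-bt}{i}\,d_{q-1,1}(t,t-i). \] In particular, $D_{2,b}(n,t)=\sum_{i=0}^{t}\binom{n-bt}{i}$.
   Context: $\Sigma_q=\{0,\ldots,q-1\}$. A $b$-burst-deletion at position $i\in[1,n-b+1]$ transforms $x_1\cdots x_n$ into $x_1\cdots x_{i-1}x_{i+b}\cdots x_n$. For $n\ge tb+1$ (and $t\ge0$), $\mathcal{D}_{t,b}(\boldsymbol{x})$ is the set of all length-$(n-tb)$ sequences obtainable from $\boldsymbol{x}$ by $t$ successive $b$-burst-deletions ($\mathcal{D}_{0,b}(\boldsymbol{x})=\{\boldsymbol{x}\}$). $D_{q,b}(n,t)=\max\{|\mathcal{D}_{t,b}(\boldsymbol{x})|:\boldsymbol{x}\in\Sigma_q^n\}$. For an alphabet size $q'\ge1$, $\sigma\in\Sigma_{q'}$ and $m\ge1$, the $b$-cyclic sequence $\boldsymbol{X}^{\sigma}_{m,q',b}=X_1\cdots X_m$ has $X_i\equiv\sigma+\lfloor (i-1)/b\rfloor\pmod{q'}$ (for $q'=1$ this is $0^m$). For $m\ge bs+1$, $s\ge 0$, $d_{q',b}(m,s):=|\mathcal{D}_{s,b}(\boldsymbol{X}^{0}_{m,q',b})|$; also $d_{q',b}(m,s)=1$ if $m=bs\ge0$, and $d_{q',b}(m,s)=0$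 if $m<bs$ or $s<0$. In particular $d_{q-1,1}(t,t-i)$ is the number of distinct subsequences of length $i$ of the cyclic sequence $\boldsymbol{X}^0_{t,q-1,1}$ (and equals $1$ when $q=2$). Convention: $\binom{m}{i}=0$ if $m<i$. *)

(* Defs.v *)
(* Sequences over Sigma_q are represented as seq nat
   (entries < q); positions are 0-indexed. *)
From mathcomp Require Import all_boot.
Set Implicit Arguments. Unset Strict Implicit. Unset Printing Implicit Defensive.

Definition burst_del (b i : nat) (x : seq nat) : seq nat :=
  take i x ++ drop (i + b) x.

(* The set D_{t,b}(x), as a duplicate-free list: all results of t successive
   b-burst-deletions (each at a valid position 0 <= i <= |x| - b). *)
Fixpoint Dlist (t b : nat) (x : seq nat) : seq (seq nat) :=
  match t with
  | 0 => [:: x]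
  | t'.+1 =>
      if b <= size x then
        undup (flatten [seq Dlist t' b (burst_del b i x) | i <- iota 0 (size x - b).+1])
      else [::]
  end.

Definition Dcard (t b : nat) (x : seq nat) : nat := size (Dlist t b x).

Definition Dmax (q b n t : nat) : nat :=
  \max_(x : n.-tuple 'I_q) Dcard t b (map (@nat_of_ord q) x).

(* b-cyclic sequence X^sigma_{m,q',b}: X_i = sigma + floor((i-1)/b) mod q'
   (1-indexed i; here 0-indexed j = i-1). *)
Definition Xcyc (sigma m q' b : nat) : seq nat :=
  mkseq (fun j => (sigma + j %/ b) %% q') m.

Definition dcyc (q' b m s : nat) : nat :=
  if m < b * s then 0
  else if m == b * s then 1
  else Dcard s b (Xcyc 0 m q' b).

(* Main.v *)
Require Import Defs.
From mathcomp Require Import all_boot zify.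
Set Implicit Arguments. Unset Strict Implicit. Unset Printing Implicit Defensive.

Lemma Dlist_uniq t b x : uniq (Dlist t b x).
Proof. case: t => [|t] //=. by case: ifP => // _; apply: undup_uniq. Qed.

Lemma DlistS s b z : Dlist s.+1 b z = if b <= size z then
  undup (flatten [seq Dlist s b (burst_del b i z) | i <- iota 0 (size z - b).+1]) else [::].
Proof. by []. Qed.

Lemma Dlist_del s b z i y : i + b <= size z ->
  y \in Dlist s b (burst_del b i z) -> y \in Dlist s.+1 b z.
Proof.
move=> Hi Hy. rewrite DlistS. have Hb: b <= size z by lia.
rewrite Hb mem_undup. apply/flattenP.
exists (Dlist s b (burst_del b i z)) => //. apply/mapP; exists i => //.
rewrite mem_iota; lia.
Qed.

Lemma Dlist_elim s b z y : y \in Dlist s.+1 b z ->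
  exists2 i, i + b <= size z & y \in Dlist s b (burst_del b i z).
Proof.
rewrite DlistS; case: ifP => // Hb; rewrite mem_undup => /flattenP [u /mapP [i Hi ->] Hy].
exists i => //. move: Hi; rewrite mem_iota; lia.
Qed.

Lemma size_burst_del b i z : i + b <= size z -> size (burst_del b i z) = size z - b.
Proof. move=> H. rewrite /burst_del size_cat size_takel ?size_drop; lia. Qed.

Lemma Dlist_size s b z y : y \in Dlist s b z -> size y + b * s = size z.
Proof.
elim: s z y => [|s IH] z y.
  by rewrite /= mem_seq1 => /eqP ->; rewrite muln0 addn0.
move=> /Dlist_elim [i Hi /IH]. rewrite size_burst_del // mulnS. lia.
Qed.

Lemma Dlist_cons s b z y c : y \in Dlist s b z -> c :: y \in Dlist s b (c :: z).
Proof.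
elim: s z y => [|s IH] z y.
  by rewrite /= !mem_seq1 => /eqP ->.
move=> /Dlist_elim [i Hi /(IH _ _)] H.
apply: (@Dlist_del _ _ _ i.+1); first by rewrite /=; lia.
by rewrite /burst_del /= in H *.
Qed.

Lemma Dlist_drop1 s b z y : b <= size z -> y \in Dlist s b (drop b z) -> y \in Dlist s.+1 b z.
Proof.
move=> Hb H. apply: (@Dlist_del _ _ _ 0); first by rewrite add0n.
by rewrite /burst_del take0 add0n.
Qed.

Lemma Dlist_drop j s b z y : j * b <= size z ->
  y \in Dlist s b (drop (j * b) z) -> y \in Dlist (s + j) b z.
Proof.
elim: j s y => [|j IH] s y.
  by rewrite mul0n drop0 addn0.
move=> Hs. rewrite mulSn -drop_drop => H.
have H1 := Dlist_drop1 _ H.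
rewrite addnS -addSn. apply: IH; first by lia.
apply: H1. rewrite size_drop. lia.
Qed.

Lemma Dlist_nonempty s b z : b * s <= size z -> drop (s * b) z \in Dlist s b z.
Proof.
move=> H. have := @Dlist_drop s 0 b z (drop (s * b) z).
rewrite add0n; apply; first by rewrite mulnC.
by rewrite /= mem_seq1.
Qed.

Lemma Dcard_base s b z : size z = b * s -> Dcard s b z = 1.
Proof.
move=> Hz. have Hin := @Dlist_nonempty s b z (eq_leq (esym Hz)).
have H : {subset Dlist s b z <= [:: [::]]}.
  move=> y /Dlist_size; rewrite Hz mem_seq1. case: y => //= a y; lia.
have := uniq_leq_size (Dlist_uniq s b z) H.
rewrite /Dcard. case: (Dlist s b z) Hin => //= a l _. lia.
Qed.


Lemma head_elim t b x c y : c :: y \in Dlist t b x -> exists k,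
  [/\ k <= t, k * b < size x, nth 0 x (k * b) = c &
      y \in Dlist (t - k) b (drop (k * b).+1 x)].
Proof.
elim: t x => [|t IH] x.
  rewrite /= mem_seq1 => /eqP <-. exists 0; split => //.
  by rewrite mul0n /= drop0 mem_seq1.
move=> /Dlist_elim [i Hi /IH [k [Hk Hks Hc Hy]]].
rewrite size_burst_del // in Hks.
case: (leqP i (k * b)) => Hik.
  exists k.+1; split => //; first by rewrite mulSn; lia.
    move: Hc => <-. rewrite /burst_del nth_cat size_takel; last by lia.
    rewrite ltnNge Hik /= nth_drop mulSn. congr nth. lia.
  rewrite subSS. move: Hy. rewrite /burst_del drop_cat size_takel; last by lia.
  rewrite ltnNge (leq_trans Hik (leqnSn _)) /= drop_drop. congr (_ \in Dlist _ _ (drop _ _)).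
  rewrite mulSn; lia.
exists k; split; [lia | lia | | ].
  by move: Hc => <-; rewrite /burst_del nth_cat size_takel ?Hik ?nth_take //; lia.
rewrite subSn //. apply: (@Dlist_del _ _ _ (i - (k * b).+1)).
  rewrite size_drop; lia.
move: Hy. rewrite /burst_del drop_cat size_takel; last by lia.
have E : (if (k * b).+1 < i
           then drop (k * b).+1 (take i x) ++ drop (i + b) x
           else drop ((k * b).+1 - i) (drop (i + b) x)) =
   take (i - (k * b).+1) (drop (k * b).+1 x) ++ drop (i - (k * b).+1 + b) (drop (k * b).+1 x).
  rewrite !drop_drop. have -> : i - (k * b).+1 + b + (k * b).+1 = i + b by lia.
  case: ifP => H1.
    congr (_ ++ _). apply: (@eq_from_nth _ 0).
      rewrite size_drop !size_takel ?size_drop; lia.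
    move=> j. rewrite size_drop size_takel; last by lia.
    move=> Hj. rewrite nth_drop !nth_take; last by lia.
      by rewrite nth_drop. by [].
  have -> : (k * b).+1 - i = 0 by lia.
  have -> : i - (k * b).+1 = 0 by lia.
  by rewrite take0 add0n.
by rewrite E.
Qed.

Lemma head_intro t b x c y k : k <= t -> k * b < size x -> nth 0 x (k * b) = c ->
  y \in Dlist (t - k) b (drop (k * b).+1 x) -> c :: y \in Dlist t b x.
Proof.
move=> Hk Hks Hc /(Dlist_cons c). rewrite -Hc -drop_nth // => H.
have := Dlist_drop (ltnW Hks) H. by rewrite subnK.
Qed.

Lemma head_greedy t b x y j k : j <= k -> k <= t -> k * b < size x ->
  y \in Dlist (t - k) b (drop (k * b).+1 x) -> y \in Dlist (t - j) b (drop (j * b).+1 x).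
Proof.
move=> Hjk Hkt Hks H.
have Hm : j * b <= k * b by apply: leq_mul.
have E : drop (k * b).+1 x = drop ((k - j) * b) (drop (j * b).+1 x).
  rewrite drop_drop mulnBl. congr drop. lia.
rewrite E in H. have := Dlist_drop _ H.
have -> : t - k + (k - j) = t - j by lia.
apply. rewrite size_drop mulnBl. lia.
Qed.


Definition fo (x : seq nat) b k :=
  nth 0 x (k * b) \notin [seq nth 0 x (j * b) | j <- iota 0 k].

Lemma uniq_flatten_cons (ks : seq nat) (f : nat -> nat) (g : nat -> seq (seq nat)) :
  uniq (map f ks) -> (forall k, uniq (g k)) ->
  uniq (flatten [seq map (cons (f k)) (g k) | k <- ks]).
Proof.
move=> + Hg; elim: ks => //= k ks IH /andP [Hk Hu].
rewrite cat_uniq map_inj_uniq ?Hg ?IH //=; last by move=> ? ? [].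
rewrite andbT. apply/negP => /hasP [y /flattenP [s /mapP [k' Hk' ->] /mapP [y' _ ->]] /mapP [y'' _ [Heq _]]].
move/negP: Hk; apply. rewrite -Heq. exact: map_f.
Qed.

Lemma fo_uniq x b t : uniq [seq nth 0 x (k * b) | k <- [seq k <- iota 0 t | fo x b k]].
Proof.
rewrite map_inj_in_uniq ?filter_uniq ?iota_uniq //.
move=> k1 k2; rewrite !mem_filter !mem_iota => /andP [H1 _] /andP [H2 _] E.
case: (ltngtP k1 k2) => // H.
  exfalso; move/negP: H2; apply; rewrite -E; apply/mapP; exists k1 => //; rewrite mem_iota; lia.
exfalso; move/negP: H1; apply; rewrite E; apply/mapP; exists k2 => //; rewrite mem_iota; lia.
Qed.

Lemma Dcard_dec t b x : b * t < size x ->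
  Dcard t b x = \sum_(k <- iota 0 t.+1 | fo x b k) Dcard (t - k) b (drop (k * b).+1 x).
Proof.
move=> Hs.
set ks := [seq k <- iota 0 t.+1 | fo x b k].
set L := flatten [seq map (cons (nth 0 x (k * b))) (Dlist (t - k) b (drop (k * b).+1 x)) | k <- ks].
have uL : uniq L by apply: uniq_flatten_cons => //; [apply: fo_uniq | move=> k; apply: Dlist_uniq].
have eqL : Dlist t b x =i L.
  move=> y; apply/idP/idP.
    move=> Hy. have := Dlist_size Hy. case: y Hy => [|c y'] Hy; first by rewrite /=; lia.
    move=> _. case/head_elim: Hy => k [Hk Hks Hc Hy'].
    have exP : exists j, (j <= t) && (nth 0 x (j * b) == c) by exists k; rewrite Hk Hc eqxx.
    case: (ex_minnP exP) => j /andP [Hjt /eqP Hjc] Hmin.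
    apply/flattenP. exists (map (cons (nth 0 x (j * b))) (Dlist (t - j) b (drop (j * b).+1 x))).
      apply/mapP; exists j => //. rewrite mem_filter mem_iota /= ltnS Hjt andbT.
      apply/mapP => [[i Hi Heq]]. move: Hi; rewrite mem_iota => /andP [_ Hi].
      have := Hmin i. rewrite -Heq Hjc eqxx andbT. have -> : i <= t by lia.
      move=> /(_ isT); lia.
    rewrite Hjc; apply: map_f. apply: head_greedy Hy' => //. by apply: Hmin; rewrite Hk Hc eqxx.
  move=> /flattenP [s /mapP [k Hk ->] /mapP [y' Hy' ->]].
  move: Hk; rewrite mem_filter mem_iota /= => /andP [_ Hk].
  apply: head_intro Hy' => //.
  apply: leq_ltn_trans Hs. rewrite mulnC. apply: leq_mul => //. 
have -> : Dcard t b x = size L.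
  rewrite /Dcard; apply: perm_size; apply: uniq_perm => //; exact: Dlist_uniq.
rewrite size_flatten /shape -map_comp sumnE big_map /ks big_filter.
apply: eq_bigr => k _. by rewrite /= size_map.
Qed.


Fixpoint hh (Q m s : nat) : nat :=
  if m is m'.+1 then \sum_(k < minn Q s.+1) hh Q m' (s - k) else 1.

Lemma sum_ord_le a a' (F : nat -> nat) : a <= a' -> \sum_(k < a) F k <= \sum_(k < a') F k.
Proof.
move=> H. rewrite -!(big_mkord xpredT) (big_cat_nat (leq0n a) H) /=.
exact: leq_addr.
Qed.

Lemma hh_mono Q m s : hh Q m s <= hh Q m s.+1.
Proof.
elim: m s => [|m IH] s //=.
apply: (@leq_trans (\sum_(k < minn Q s.+1) hh Q m (s.+1 - k))).
  apply: leq_sum => k _. have Hk : k <= s by have := ltn_ord k; rewrite leq_min; lia.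
  rewrite (subSn Hk). exact: IH.
apply: (sum_ord_le (fun k => hh Q m (s.+1 - k))). rewrite leq_min geq_minl /=. apply: leq_trans (geq_minr _ _) _. lia.
Qed.

Lemma hh_mono_le Q m s s' : s <= s' -> hh Q m s <= hh Q m s'.
Proof.
move/subnKC <-. elim: (s' - s) => [|d IH]; first by rewrite addn0.
apply: leq_trans IH _. rewrite addnS. exact: hh_mono.
Qed.

Lemma sum_bound (f : nat -> nat) t r (I : seq nat) :
  (forall k, f k.+1 <= f k) -> uniq I -> all (fun i => i < t) I -> size I <= r ->
  \sum_(i <- I) f i <= \sum_(k < minn r t) f k.
Proof.
elim: t f r I => [|t IH] f r I Hf.
  case: I => [|a I]; first by rewrite big_nil. by move=> _ /andP [].
move=> HU Ha Hsz.
set J := [seq i.-1 | i <- I & i != 0].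
have EJ : \sum_(i <- I | i != 0) f i = \sum_(j <- J) f j.+1.
  rewrite big_map -big_filter. apply: eq_big_seq => i.
  rewrite mem_filter => /andP [Hi _]. by rewrite prednK // lt0n.
have UJ : uniq J.
  rewrite map_inj_in_uniq ?filter_uniq //.
  move=> i1 i2; rewrite !mem_filter => /andP [H1 _] /andP [H2 _] E.
  by case: i1 H1 E => // i1 _; case: i2 H2 => // i2 _ /= ->.
have AJ : all (fun i => i < t) J.
  apply/allP => j /mapP [i]; rewrite mem_filter => /andP [Hi0 Hi] ->.
  have := allP Ha i Hi. move: Hi0; rewrite -lt0n; lia.
have SJ : size J + (0 \in I) = size I.
  rewrite size_map size_filter -(count_uniq_mem 0 HU) -(count_predC (pred1 0) I) addnC.
  congr (_ + _).
case: (boolP (0 \in I)) => H0.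
  rewrite (bigD1_seq 0) //= EJ.
  have Hr : 0 < r by move: SJ Hsz; rewrite H0; lia.
  have -> : minn r t.+1 = (minn r.-1 t).+1 by rewrite -minnSS prednK.
  rewrite big_ord_recl /=. rewrite leq_add2l.
  apply: (IH (fun k => f k.+1)) => //. move: SJ Hsz; rewrite H0; lia.
have -> : \sum_(i <- I) f i = \sum_(i <- I | i != 0) f i.
  have E : [seq i <- I | i != 0] = I.
    apply/all_filterP/allP => i Hi. by apply: contraNneq H0 => <-.
  by rewrite -[in RHS]big_filter E.
rewrite EJ. apply: (@leq_trans (\sum_(j <- J) f j)); first by apply: leq_sum.
apply: leq_trans (IH f r J Hf UJ AJ _) _.
  move: SJ Hsz; rewrite (negbTE H0); lia.
apply: sum_ord_le. rewrite leq_min geq_minl /=. apply: leq_trans (geq_minr _ _) _. lia.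
Qed.


Lemma upper Q b t m x : 0 < b -> all (fun a => a < Q) x -> size x = b * t + m ->
  Dcard t b x <= hh Q m t.
Proof.
move=> Hb. elim: m t x => [|m IH] t x Hx Hs.
  by rewrite Dcard_base // Hs addn0.
rewrite Dcard_dec; last by lia.
apply: (@leq_trans (\sum_(k <- iota 0 t.+1 | fo x b k) hh Q m (t - k))).
  rewrite big_seq_cond [X in _ <= X]big_seq_cond. apply: leq_sum => k /andP []; rewrite mem_iota => /andP [_ Hk] _.
  apply: IH.
    apply/allP => a Ha. apply: (allP Hx). exact: mem_drop Ha.
  have : b * k <= b * t by apply: leq_mul; lia.
  rewrite size_drop Hs mulnBr mulnC. lia.
rewrite -big_filter.
apply: sum_bound.
- move=> k. apply: hh_mono_le. lia.
- exact: filter_uniq (iota_uniq _ _).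
- apply/allP => k; rewrite mem_filter mem_iota; lia.
- rewrite -(size_map (fun k => nth 0 x (k * b))) -(size_iota 0 Q).
  apply: uniq_leq_size; first exact: fo_uniq.
  move=> a /mapP [k]; rewrite mem_filter mem_iota => /andP [_ Hk] ->.
  rewrite mem_iota add0n /=. apply: (allP Hx). apply: mem_nth.
  have : k * b <= t * b by apply: leq_mul; lia.
  move: Hk => /andP [_ Hk] H. rewrite Hs. rewrite [t * b]mulnC in H. lia.
Qed.


Definition Ycyc Q b sigma r n := mkseq (fun j => (sigma + (j + r) %/ b) %% Q) n.

Lemma Ycyc_nth Q b sigma r n k : 0 < b -> r < b -> k * b < n ->
  nth 0 (Ycyc Q b sigma r n) (k * b) = (sigma + k) %% Q.
Proof.
move=> Hb Hr Hk. rewrite nth_mkseq // divnMDl // divn_small // addn0 //.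
Qed.

Lemma Ycyc_drop Q b sigma r n k : 0 < b -> r < b ->
  drop (k * b).+1 (Ycyc Q b sigma r n) =
  if r.+1 < b then Ycyc Q b (sigma + k) r.+1 (n - (k * b).+1)
  else Ycyc Q b (sigma + k).+1 0 (n - (k * b).+1).
Proof.
move=> Hb Hr.
have Hsz : size (drop (k * b).+1 (Ycyc Q b sigma r n)) = n - (k * b).+1.
  by rewrite size_drop size_mkseq.
apply: (@eq_from_nth _ 0).
  by case: ifP => _; rewrite Hsz size_mkseq.
rewrite Hsz => j Hj. rewrite nth_drop nth_mkseq; last by lia.
have E : (k * b).+1 + j + r = k * b + (j + r.+1) by lia.
rewrite E divnMDl //.
case: ifP => H; rewrite nth_mkseq //.
  by rewrite addnA.
have -> : r.+1 = b by lia.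
rewrite divnDr ?dvdnn // divnn Hb addn0. congr (_ %% _). lia.
Qed.

Lemma fo_Ycyc Q b sigma r n k : 0 < Q -> 0 < b -> r < b -> k * b < n ->
  fo (Ycyc Q b sigma r n) b k = (k < Q).
Proof.
move=> HQ Hb Hr Hk. rewrite /fo Ycyc_nth //.
have -> : [seq nth 0 (Ycyc Q b sigma r n) (j * b) | j <- iota 0 k] =
          [seq (sigma + j) %% Q | j <- iota 0 k].
  apply/eq_in_map => j; rewrite mem_iota => /andP [_ Hj]. apply: Ycyc_nth => //.
  have : j * b <= k * b by apply: leq_mul; lia.
  lia.
case: (ltnP k Q) => HkQ.
  apply/negP => /mapP [j]; rewrite mem_iota => /andP [_ Hj] /eqP.
  rewrite eqn_modDl !modn_small //; lia.
apply/negP/negP/mapP. exists (k - Q); first by rewrite mem_iota; lia.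
have -> : sigma + k = (sigma + (k - Q)) + Q by lia.
by rewrite modnDr.
Qed.

Lemma sum_nat_lt (F : nat -> nat) Q n :
  \sum_(0 <= k < n | k < Q) F k = \sum_(k < minn Q n) F k.
Proof.
rewrite -(big_mkord xpredT) big_mkcond. elim: n => [|n IH]; first by rewrite minn0 !big_geq.
rewrite !big_nat_recr //= IH.
case: (boolP (n < Q)) => H.
  have -> : minn Q n.+1 = (minn Q n).+1 by lia.
  rewrite big_nat_recr //=. congr (_ + F _). lia.
have -> : minn Q n.+1 = minn Q n by lia.
by rewrite addn0.
Qed.

Lemma cyc Q b t m sigma r : 0 < Q -> 0 < b -> r < b ->
  Dcard t b (Ycyc Q b sigma r (b * t + m)) = hh Q m t.
Proof.
move=> HQ Hb. elim: m t sigma r => [|m IH] t sigma r Hr.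
  by rewrite Dcard_base // size_mkseq addn0.
rewrite Dcard_dec; last by rewrite size_mkseq; lia.
rewrite big_seq_cond.
rewrite (eq_bigl (fun k => (k \in iota 0 t.+1) && (k < Q))); last first.
  move=> k. case: (boolP (k \in iota 0 t.+1)) => Hin; rewrite ?andTb ?andFb //.
  move: Hin; rewrite mem_iota => /andP [_ Hk]. apply: fo_Ycyc => //.
  have : k * b <= t * b by apply: leq_mul; lia.
  rewrite [t * b]mulnC. lia.
rewrite -big_seq_cond.
rewrite (_ : iota 0 t.+1 = index_iota 0 t.+1) // sum_nat_lt /=.
apply: eq_bigr => k _.
have Hk : k <= t by have := ltn_ord k; rewrite leq_min; lia.
have Hkb : b * k <= b * t by apply: leq_mul.
rewrite Ycyc_drop //.
have -> : b * t + m.+1 - (k * b).+1 = b * (t - k) + m by rewrite mulnBr [k * b]mulnC; lia.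
case: ifP => H; rewrite IH //.
Qed.


Lemma Dmax_eq q b n t : 0 < q -> 0 < b -> b * t <= n -> Dmax q b n t = hh q (n - b * t) t.
Proof.
move=> Hq Hb Hn. apply/eqP; rewrite eqn_leq; apply/andP; split.
  apply/bigmax_leqP => x _. apply: upper => //.
    apply/allP => a /mapP [i _ ->]; exact: ltn_ord.
  by rewrite size_map size_tuple subnKC.
pose s := [seq Ordinal (ltn_pmod (0 + (j + 0) %/ b) Hq) | j <- iota 0 n].
have Hs : size s == n by rewrite size_map size_iota.
pose x := Tuple Hs.
apply: leq_trans (leq_bigmax x).
have -> : map (@nat_of_ord q) x = Ycyc q b 0 0 (b * t + (n - b * t)).
  rewrite subnKC // /Ycyc /mkseq /= -map_comp. by apply: eq_map.
by rewrite cyc.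
Qed.

Lemma sum_widen a N (F : nat -> nat) : a <= N ->
  \sum_(k < a) F k = \sum_(k < N) (k < a) * F k.
Proof.
move=> H. rewrite (big_ord_widen N F H) big_mkcond. apply: eq_bigr => k _.
by case: ifP => //=; rewrite mul1n.
Qed.

Lemma hhS Q m s : hh Q m.+1 s = \sum_(k < minn Q s.+1) hh Q m (s - k).
Proof. by []. Qed.
Lemma hh0 Q s : hh Q 0 s = 1.
Proof. by []. Qed.
Arguments hh : simpl never.

Lemma core_sum Q m s :
  \sum_(k < minn Q s.+1) \sum_(i < (s - k).+1) 'C(m, i) * hh Q i (s - k - i) =
  \sum_(i < s.+1) 'C(m, i) * hh Q i.+1 (s - i).
Proof.
under [in RHS]eq_bigr => i _ do rewrite hhS big_distrr.
rewrite (sum_widen (fun k => \sum_(i < (s - k).+1) 'C(m, i) * hh Q i (s - k - i)) (geq_minl Q s.+1)) /=.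
under eq_bigr => k _ do rewrite (sum_widen (fun i => 'C(m, i) * hh Q i (s - k - i)) (leq_subr k s : (s - k).+1 <= s.+1)) big_distrr.
under [in RHS]eq_bigr => i _ do rewrite (sum_widen (fun k => 'C(m, i) * hh Q i (s - i - k)) (geq_minl Q (s - i).+1)).
rewrite exchange_big /=. apply: eq_bigr => i _. apply: eq_bigr => k _.
rewrite mulnA. have Hk := ltn_ord k. have Hi := ltn_ord i.
have -> : s - i - k = s - k - i by lia.
congr (_ * _). rewrite mulnb. congr (nat_of_bool _).
rewrite !leq_min Hk /=.
apply/idP/idP; [move=> /andP [] | move=> ?; apply/andP; split]; lia.
Qed.

Lemma hh_closed Q m t : hh Q.+1 m t = \sum_(i < t.+1) 'C(m, i) * hh Q i (t - i).
Proof.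
elim: m t => [|m IH] t.
  rewrite big_ord_recl /= bin0 mul1n hh0 big1 //.
rewrite hhS. under eq_bigr => k _ do rewrite IH.
case: t => [|s].
  by rewrite big_ord1 /= !big_ord1 /= !bin0 !hh0.
have E1 : \sum_(i < s.+2) 'C(m.+1, i) * hh Q i (s.+1 - i) =
   \sum_(i < s.+2) 'C(m, i) * hh Q i (s.+1 - i) +
   \sum_(i < s.+1) 'C(m, i) * hh Q i.+1 (s - i).
  rewrite big_ord_recl [in RHS]big_ord_recl !bin0 -addnA. f_equal.
  rewrite -big_split /=. apply: eq_bigr => i _. by rewrite /bump /= add1n subSS binS mulnDl addnC.
rewrite E1 -core_sum minnSS [in LHS]big_ord_recl /= subn0. congr (_ + _).
Qed.


Lemma hh_one m s : hh 1 m s = 1.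
Proof.
elim: m s => [|m IH] s; first exact: hh0.
by rewrite hhS minnSS min0n big_ord1 IH.
Qed.

Lemma dcyc_eq Q t i : 0 < Q -> i <= t -> dcyc Q 1 t (t - i) = hh Q i (t - i).
Proof.
move=> HQ Hi. rewrite /dcyc mul1n ltnNge leq_subr /=.
case: eqP => H.
  have -> : i = 0 by lia.
  by rewrite hh0.
have -> : Xcyc 0 t Q 1 = Ycyc Q 1 0 0 (1 * (t - i) + i).
  rewrite /Xcyc /Ycyc mul1n subnK //. apply: eq_mkseq => j. by rewrite addn0.
by rewrite cyc.
Qed.

Theorem theorem4p6 (q t b n sigma : nat) :
  2 <= q -> 1 <= t -> 1 <= b -> b * t + 1 <= n -> sigma < q ->
  [/\ Dcard t b (Xcyc sigma n q b) = Dmax q b n t,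
      Dmax q b n t = \sum_(0 <= i < t.+1) 'C(n - b * t, i) * dcyc q.-1 1 t (t - i)
    & Dmax 2 b n t = \sum_(0 <= i < t.+1) 'C(n - b * t, i)].
Proof.
move=> Hq Ht Hb Hn Hs.
have Hq0 : 0 < q by lia.
have Hbt : b * t <= n by lia.
split.
- rewrite Dmax_eq //.
  have -> : Xcyc sigma n q b = Ycyc q b sigma 0 (b * t + (n - b * t)).
    rewrite subnKC // /Xcyc /Ycyc. apply: eq_mkseq => j. by rewrite addn0.
  by rewrite cyc.
- rewrite Dmax_eq // -(prednK Hq0) hh_closed big_mkord prednK //.
  apply: eq_bigr => i _. rewrite dcyc_eq //; first lia.
  by have := ltn_ord i; lia.
- rewrite Dmax_eq // hh_closed big_mkord. apply: eq_bigr => i _.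
  by rewrite hh_one muln1.
Qed.
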